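(* Let $([N],\mathcal{E})$ be a fixed (non-random) directed graph whose underlying undirected graph is a tree, and condition the model on the skeleton being this graph (i.e. $I_{vw}=1$ iff $(vw)\in\mathcal{E}$, with the types fixed). Let $\lambda\in(0,1]$ and define the solvency cascade by: for $n\ge0$, $\mathcal{D}^{(n)}_v:=g_\lambda(\Delta^{(n)}_v/\bar X_v)$ (with $\mathcal{D}^{(n)}_v:=0$ if $\bar X_v=0$), $S^{(n)}_{wv}:=I_{wv}\bar\Omega_{wv}\mathcal{D}^{(n)}_w$, $S^{(n)}_v:=\sum_{w\ne v}S^{(n)}_{wv}$, $\Delta^{(n+1)}_v:=\Delta^{(0)}_v-S^{(n)}_v$. Then for every $n\ge0$, every $v\in[N]$ and every edge $(wv)\in\mathcal{E}$: (1) $\Delta^{(n)}_v$ is $\sigma(\mathcal{M}^-_v\cup\{v\})$-measurable; (2) $S^{(n)}_{wv}$ is $\sigma(\mathcal{M}^-_w\cup\mathcal{M}^+_{w\setminus v}\cup\{w\}\cup\{(wv)\})$-measurable; (3) $S^{(n)}_v$ is $\sigma(\mathcal{M}^-_v)$-measurable.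
   Context: Balance-sheet data: initial solvency buffers $\Delta^{(0)}_u\in\mathbb{R}$ for nodes $u$ and exposures $\bar\Omega_{wv}\ge0$ for edges $(wv)$; an edge $(wv)\in\mathcal{E}$ (i.e. $I_{wv}=1$) means bank $w$ has borrowed from bank $v$, so shocks pass from $w$ to $v$. $\bar X_w:=\sum_{u}I_{wu}\bar\Omega_{wu}$ and $g_\lambda(x):=\min(1,\max(-x/\lambda,0))$. For a set $A$ of nodes and edges, $\sigma(A)$ is the sigma-algebra generated by $\{\Delta^{(0)}_u: u\in A \text{ a node}\}\cup\{\bar\Omega_{wv}:(wv)\in A\text{ an edge}\}$. For a node $u$ and an edge $e$ incident to $u$, let $C(e,u)$ be the set consisting of $e$ together with all nodes and edges of the connected component, not containing $u$, of the tree with $e$ removed. Define $\mathcal{M}^-_u:=\bigcup\{C(e,u): e=(wu)\in\mathcal{E}\text{ directed into }u\}$, $\mathcal{M}^+_u:=\bigcup\{C(e,u): e=(uw)\in\mathcal{E}\text{ directed out of }u\}$, and for an edge $(wv)\in\mathcal{E}$, $\mathcal{M}^-_{v\setminus w}:=\bigcup\{C(e,v): e\text{ directed into }v,\ e\neq(wv)\}$ and $\mathcal{M}^+_{w\setminus v}:=\bigcup\{C(e,w): e\text{ directed out of }w,\ e\ne(wv)\}$. *)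

(* Defs.v *)
From Stdlib Require Import Reals Lra Lia List Arith.
Import ListNotations.
Open Scope R_scope.

Inductive sigma_gen {T : Type} (G : (T -> Prop) -> Prop) : (T -> Prop) -> Prop :=
| sg_base : forall S, G S -> sigma_gen G S
| sg_full : sigma_gen G (fun _ => True)
| sg_compl : forall S, sigma_gen G S -> sigma_gen G (fun x => ~ S x)
| sg_union : forall F : nat -> T -> Prop,
    (forall k, sigma_gen G (F k)) -> sigma_gen G (fun x => exists k, F k x)
| sg_ext : forall S S', sigma_gen G S -> (forall x, S x <-> S' x) -> sigma_gen G S'.

Definition Borel : (R -> Prop) -> Prop :=
  sigma_gen (fun S => exists a : R, forall x, S x <-> x <= a).

Definition measurable_wrt {Omega : Type} (G : (Omega -> Prop) -> Prop)
  (Z : Omega -> R) : Prop :=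
  forall B, Borel B -> sigma_gen G (fun w => B (Z w)).

Inductive item : Type :=
| NodeI : nat -> item          (* node u : Delta^(0)_u *)
| EdgeI : nat -> nat -> item.  (* edge (w v) : Omegabar_{wv} *)

(* sigma(A): generated by Delta0_u (u a node in A) and Omegabar_{wv}
   ((wv) an edge in A). *)
Definition var {Omega : Type} (D0 : nat -> Omega -> R) (Om : nat -> nat -> Omega -> R)
  (i : item) : Omega -> R :=
  match i with NodeI u => D0 u | EdgeI w v => Om w v end.

Definition sigmaA {Omega : Type} (D0 : nat -> Omega -> R) (Om : nat -> nat -> Omega -> R)
  (A : item -> Prop) : (Omega -> Prop) -> Prop :=
  fun S => exists i, A i /\ exists B, Borel B /\ forall w, S w <-> B (var D0 Om i w).

(* E w v = true  means (wv) is a directed edge (w borrowed from v). *)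
Definition adj (E : nat -> nat -> bool) (u w : nat) : Prop :=
  E u w = true \/ E w u = true.

Inductive reach (Rl : nat -> nat -> Prop) : nat -> nat -> Prop :=
| reach_refl : forall x, reach Rl x x
| reach_step : forall x y z, Rl x y -> reach Rl y z -> reach Rl x z.

Fixpoint chain (Rl : nat -> nat -> Prop) (l : list nat) : Prop :=
  match l with
  | a :: ((b :: _) as t) => Rl a b /\ chain Rl t
  | _ => True
  end.

Definition is_tree (N : nat) (E : nat -> nat -> bool) : Prop :=
  (forall u w, E u w = true -> (u < N)%nat /\ (w < N)%nat) /\
  (forall u, E u u = false) /\
  (forall u w, E u w = true -> E w u = false) /\
  (forall x y, (x < N)%nat -> (y < N)%nat -> reach (adj E) x y) /\
  (forall (x : nat) (l : list nat), NoDup (x :: l) -> (2 <= length l)%nat ->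
      chain (adj E) (x :: l) -> adj E (last l x) x -> False).

(* Nodes of the connected component, containing x and not u, of the tree
   with the edge {u,x} removed. *)
Definition comp (E : nat -> nat -> bool) (u x y : nat) : Prop :=
  reach (fun p q => adj E p q /\ ~ ((p = u /\ q = x) \/ (p = x /\ q = u))) x y.

(* C(e,u) for the edge e between u and x (e is the item of that edge):
   e together with all nodes and edges of the component above. *)
Definition Cset (E : nat -> nat -> bool) (u x : nat) (e : item) (i : item) : Prop :=
  i = e \/
  match i with
  | NodeI y => comp E u x y
  | EdgeI p q => E p q = true /\ comp E u x p /\ comp E u x q
  end.

Definition Mminus (E : nat -> nat -> bool) (u : nat) (i : item) : Prop :=
  exists w, E w u = true /\ Cset E u w (EdgeI w u) i.

Definition Mplus (E : nat -> nat -> bool) (u : nat) (i : item) : Prop :=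
  exists w, E u w = true /\ Cset E u w (EdgeI u w) i.

Definition Mminus_excl (E : nat -> nat -> bool) (v w : nat) (i : item) : Prop :=
  exists w', E w' v = true /\ w' <> w /\ Cset E v w' (EdgeI w' v) i.

Definition Mplus_excl (E : nat -> nat -> bool) (w v : nat) (i : item) : Prop :=
  exists v', E w v' = true /\ v' <> v /\ Cset E w v' (EdgeI w v') i.

Definition g_lam (lam x : R) : R := Rmin 1 (Rmax (- x / lam) 0).

Definition Ind (E : nat -> nat -> bool) (w v : nat) : R := if E w v then 1 else 0.

Definition Rsum_list (l : list nat) (f : nat -> R) : R :=
  fold_right (fun a acc => f a + acc) 0 l.

Definition Xbar {Omega : Type} (N : nat) (E : nat -> nat -> bool)
  (Om : nat -> nat -> Omega -> R) (w : nat) (om : Omega) : R :=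
  Rsum_list (seq 0 N) (fun u => Ind E w u * Om w u om).

Definition Dfun {Omega : Type} (N : nat) (E : nat -> nat -> bool)
  (Om : nat -> nat -> Omega -> R) (lam : R) (Delta : nat -> Omega -> R)
  (v : nat) (om : Omega) : R :=
  if Req_EM_T (Xbar N E Om v om) 0 then 0
  else g_lam lam (Delta v om / Xbar N E Om v om).

Definition Sfun {Omega : Type} (N : nat) (E : nat -> nat -> bool)
  (Om : nat -> nat -> Omega -> R) (lam : R) (Delta : nat -> Omega -> R)
  (v : nat) (om : Omega) : R :=
  Rsum_list (filter (fun w => negb (Nat.eqb w v)) (seq 0 N))
    (fun w => Ind E w v * Om w v om * Dfun N E Om lam Delta w om).

Fixpoint cascade {Omega : Type} (N : nat) (E : nat -> nat -> bool)
  (D0 : nat -> Omega -> R) (Om : nat -> nat -> Omega -> R) (lam : R)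
  (n : nat) : nat -> Omega -> R :=
  match n with
  | O => D0
  | S m => fun v om => D0 v om - Sfun N E Om lam (cascade N E D0 Om lam m) v om
  end.

Definition Dn {Omega : Type} N E (D0 : nat -> Omega -> R) Om lam n :=
  Dfun N E Om lam (cascade N E D0 Om lam n).

Definition S_edge {Omega : Type} N E (D0 : nat -> Omega -> R) Om lam n (w v : nat)
  (om : Omega) : R :=
  Ind E w v * Om w v om * Dn N E D0 Om lam n w om.

Definition S_node {Omega : Type} N E (D0 : nat -> Omega -> R) Om lam n (v : nat) :=
  Sfun N E Om lam (cascade N E D0 Om lam n) v.

(* Main.v *)
Require Import Defs.
From Stdlib Require Import Reals Lra Lia List Arith Classical.
Import ListNotations.
Open Scope R_scope.

Lemma sg_empty {T} (G : (T -> Prop) -> Prop) : sigma_gen G (fun _ => False).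
Proof. apply sg_ext with (fun x => ~ True). apply sg_compl, sg_full. tauto. Qed.

Lemma sg_or {T} (G : (T -> Prop) -> Prop) A B :
  sigma_gen G A -> sigma_gen G B -> sigma_gen G (fun x => A x \/ B x).
Proof.
  intros HA HB.
  apply sg_ext with (fun x => exists k, (match k with O => A | _ => B end) x).
  - apply sg_union. intros [|k]; auto.
  - intros x; split.
    + intros [[|k] H]; auto.
    + intros [H|H]; [exists O|exists 1%nat]; auto.
Qed.

Lemma sg_and {T} (G : (T -> Prop) -> Prop) A B :
  sigma_gen G A -> sigma_gen G B -> sigma_gen G (fun x => A x /\ B x).
Proof.
  intros HA HB.
  apply sg_ext with (fun x => ~ (~ A x \/ ~ B x)).
  - apply sg_compl, sg_or; apply sg_compl; auto.
  - intros x; split.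
    + intro H. destruct (classic (A x)), (classic (B x)); tauto.
    + tauto.
Qed.

Lemma sg_const {T} (G : (T -> Prop) -> Prop) (P : Prop) : sigma_gen G (fun _ => P).
Proof.
  destruct (classic P).
  - apply sg_ext with (fun _ => True). apply sg_full. tauto.
  - apply sg_ext with (fun _ => False). apply sg_empty. tauto.
Qed.

Lemma sg_all {T} (G : (T -> Prop) -> Prop) (F : nat -> T -> Prop) :
  (forall k, sigma_gen G (F k)) -> sigma_gen G (fun x => forall k, F k x).
Proof.
  intros H. apply sg_ext with (fun x => ~ exists k, ~ F k x).
  - apply sg_compl, sg_union. intro k; apply sg_compl; auto.
  - intros x; split.
    + intros H1 k. apply NNPP. intro H2. apply H1. eauto.
    + intros H1 [k Hk]. auto.
Qed.

Lemma sg_mono {T} (G G' : (T -> Prop) -> Prop) :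
  (forall S, G S -> G' S) -> forall S, sigma_gen G S -> sigma_gen G' S.
Proof.
  intros HG S H. induction H.
  - apply sg_base; auto.
  - apply sg_full.
  - apply sg_compl; auto.
  - apply sg_union; auto.
  - eapply sg_ext; eauto.
Qed.

Lemma meas_mono {T} (G G' : (T -> Prop) -> Prop) Z :
  (forall S, G S -> G' S) -> measurable_wrt G Z -> measurable_wrt G' Z.
Proof. intros HG H B HB. eapply sg_mono; eauto. Qed.

Lemma meas_ext {T} (G : (T -> Prop) -> Prop) (Z Z' : T -> R) :
  measurable_wrt G Z -> (forall w, Z w = Z' w) -> measurable_wrt G Z'.
Proof.
  intros H He B HB. apply sg_ext with (fun w => B (Z w)); auto.
  intros; rewrite He; tauto.
Qed.

Lemma meas_const {T} (G : (T -> Prop) -> Prop) c : measurable_wrt G (fun _ => c).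
Proof. intros B _; apply sg_const. Qed.

Lemma arch e : 0 < e -> exists n, / (INR n + 1) < e.
Proof.
  intros He. destruct (archimed_cor1 e He) as [n [H1 H2]].
  exists n. apply Rle_lt_trans with (/ INR n); auto.
  apply Rinv_le_contravar. apply lt_0_INR; auto. lra.
Qed.

Lemma inv_pos n : 0 < / (INR n + 1).
Proof. apply Rinv_0_lt_compat. pose proof (pos_INR n). lra. Qed.

Lemma borel_le a : Borel (fun x => x <= a).
Proof. apply sg_base. exists a; tauto. Qed.

Lemma borel_lt a : Borel (fun x => x < a).
Proof.
  apply sg_ext with (fun x => exists n, (fun n x => x <= a - / (INR n + 1)) n x).
  - apply sg_union. intro; apply borel_le.
  - intros x; split.
    + intros [n Hn]. pose proof (inv_pos n). simpl in Hn. lra.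
    + intros H. destruct (arch (a - x)) as [n Hn]; [lra|]. exists n. simpl. lra.
Qed.

Lemma borel_ge a : Borel (fun x => a <= x).
Proof.
  apply sg_ext with (fun x => ~ x < a). apply sg_compl, borel_lt.
  intros x; split; intros; lra.
Qed.

Lemma borel_gt a : Borel (fun x => a < x).
Proof.
  apply sg_ext with (fun x => ~ x <= a). apply sg_compl, borel_le.
  intros x; split; intros; lra.
Qed.

Lemma borel_eq a : Borel (fun x => x = a).
Proof.
  apply sg_ext with (fun x => x <= a /\ a <= x). apply sg_and; [apply borel_le|apply borel_ge].
  intros x; split; intros; lra.
Qed.

Lemma borel_abs q c : Borel (fun x => Rabs (x - q) < c).
Proof.
  apply sg_ext with (fun x => x < q + c /\ q - c < x).
  apply sg_and; [apply borel_lt|apply borel_gt].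
  intros x; split; intros H.
  - apply Rabs_def1; lra.
  - apply Rabs_def2 in H; lra.
Qed.

Lemma crit_le {T} (G : (T -> Prop) -> Prop) (Z : T -> R) :
  (forall a, sigma_gen G (fun w => Z w <= a)) -> measurable_wrt G Z.
Proof.
  intros H B HB. unfold Borel in HB. induction HB.
  - destruct H0 as [a Ha]. apply sg_ext with (fun w => Z w <= a); auto.
    intros; rewrite Ha; tauto.
  - apply sg_full.
  - apply sg_compl; auto.
  - apply (sg_union G (fun k w => F k (Z w))); auto.
  - apply sg_ext with (fun w => S (Z w)); auto.
Qed.

Lemma crit_lt {T} (G : (T -> Prop) -> Prop) (Z : T -> R) :
  (forall a, sigma_gen G (fun w => Z w < a)) -> measurable_wrt G Z.
Proof.
  intros H. apply crit_le. intros a.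
  apply sg_ext with (fun w => forall n, (fun n w => Z w < a + / (INR n + 1)) n w).
  - apply sg_all. intros n; apply H.
  - intros w; split.
    + intros Hn. destruct (Rle_dec (Z w) a) as [h|h]; auto.
      destruct (arch (Z w - a)) as [n Hn']; [lra|]. specialize (Hn n). simpl in Hn. lra.
    + intros Hw n. simpl. pose proof (inv_pos n). lra.
Qed.

Definition openS (S : R -> R -> Prop) := forall x y, S x y -> exists r, 0 < r /\
  forall x' y', Rabs (x' - x) < r -> Rabs (y' - y) < r -> S x' y'.

Lemma nat_pair_Z z : INR (Z.to_nat z) - INR (Z.to_nat (- z)) = IZR z.
Proof.
  destruct z as [|p|p]; simpl.
  - lra.
  - rewrite INR_IPR. unfold IZR. lra.
  - rewrite INR_IPR. unfold IZR. lra.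
Qed.

Lemma approx x t : 0 < t -> exists i j : nat, Rabs (x - (INR i - INR j) * t) < 2 * t.
Proof.
  intros Ht. destruct (archimed (x / t)) as [h1 h2].
  exists (Z.to_nat (up (x / t))), (Z.to_nat (- up (x / t))).
  rewrite nat_pair_Z. set (z := IZR (up (x / t))) in *.
  assert (Hx : x = (x / t) * t) by (field; lra).
  assert (A1 : z * t > (x / t) * t) by (apply Rmult_lt_compat_r; lra).
  assert (A2 : z * t - (x / t) * t <= t).
  { replace (z * t - x / t * t) with ((z - x / t) * t) by ring.
    assert ((z - x / t) * t <= 1 * t) by (apply Rmult_le_compat_r; lra). lra. }
  apply Rabs_def1; lra.
Qed.

Lemma meas_box {T} (G : (T -> Prop) -> Prop) X Y S :
  measurable_wrt G X -> measurable_wrt G Y -> openS S ->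
  sigma_gen G (fun w => S (X w) (Y w)).
Proof.
  intros HX HY HS.
  set (t := fun k : nat => / (INR k + 1)).
  set (q := fun k i j : nat => (INR i - INR j) * t k).
  apply sg_ext with (fun w => exists k i1 j1 i2 j2 : nat,
    (forall x' y', Rabs (x' - q k i1 j1) < 2 * t k -> Rabs (y' - q k i2 j2) < 2 * t k -> S x' y')
    /\ Rabs (X w - q k i1 j1) < 2 * t k /\ Rabs (Y w - q k i2 j2) < 2 * t k).
  - do 5 (apply (sg_union G); intro).
    apply sg_and; [apply sg_const|]. apply sg_and.
    + exact (HX _ (borel_abs _ _)).
    + exact (HY _ (borel_abs _ _)).
  - intros w; split.
    + intros [k [i1 [j1 [i2 [j2 [H1 [H2 H3]]]]]]]. auto.
    + intros Hw. destruct (HS _ _ Hw) as [r [Hr Hb]].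
      destruct (arch (r / 4)) as [k Hk]; [lra|].
      assert (Htk : 0 < t k) by apply inv_pos.
      destruct (approx (X w) (t k) Htk) as [i1 [j1 H1]].
      destruct (approx (Y w) (t k) Htk) as [i2 [j2 H2]].
      exists k, i1, j1, i2, j2. fold (t k) in Hk. split; [|split; auto].
      intros x' y' Hx Hy. apply Hb.
      * apply Rabs_def2 in Hx. apply Rabs_def2 in H1. apply Rabs_def1; unfold q in *; lra.
      * apply Rabs_def2 in Hy. apply Rabs_def2 in H2. apply Rabs_def1; unfold q in *; lra.
Qed.

Lemma open_plus a : openS (fun x y => x + y < a).
Proof.
  intros x y H. exists ((a - x - y) / 2). split; [lra|].
  intros x' y' Hx Hy. apply Rabs_def2 in Hx. apply Rabs_def2 in Hy. lra.
Qed.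

Lemma open_mult a : openS (fun x y => x * y < a).
Proof.
  intros x y H. set (d := a - x * y). set (M := Rabs x + Rabs y + 1).
  assert (HM : 0 < M) by (unfold M; pose proof (Rabs_pos x); pose proof (Rabs_pos y); lra).
  exists (Rmin 1 (d / (2 * M))). split.
  { apply Rmin_glb_lt; [lra|]. unfold Rdiv. apply Rmult_lt_0_compat; [unfold d; lra|].
    apply Rinv_0_lt_compat; lra. }
  intros x' y' Hx Hy. set (r := Rmin 1 (d / (2 * M))) in *.
  assert (Hr1 : r <= 1) by apply Rmin_l.
  assert (Hr2 : r <= d / (2 * M)) by apply Rmin_r.
  set (dx := x' - x) in *. set (dy := y' - y) in *.
  assert (h1 : x * dy <= Rabs x * r).
  { eapply Rle_trans; [apply Rle_abs|]. rewrite Rabs_mult.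
    apply Rmult_le_compat_l; [apply Rabs_pos|lra]. }
  assert (h2 : y * dx <= Rabs y * r).
  { eapply Rle_trans; [apply Rle_abs|]. rewrite Rabs_mult.
    apply Rmult_le_compat_l; [apply Rabs_pos|lra]. }
  assert (h3 : dx * dy <= 1 * r).
  { eapply Rle_trans; [apply Rle_abs|]. rewrite Rabs_mult.
    apply Rmult_le_compat; try apply Rabs_pos; lra. }
  assert (h4 : M * r <= d / 2).
  { replace (d / 2) with (M * (d / (2 * M))) by (field; lra).
    apply Rmult_le_compat_l; lra. }
  assert (Hd : 0 < d) by (unfold d; lra).
  replace (x' * y') with (x * y + x * dy + y * dx + dx * dy) by (unfold dx, dy; ring).
  unfold M in h4. unfold d in *. lra.
Qed.

Lemma meas_plus {T} (G : (T -> Prop) -> Prop) X Y :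
  measurable_wrt G X -> measurable_wrt G Y -> measurable_wrt G (fun w => X w + Y w).
Proof. intros HX HY. apply crit_lt. intros a. apply (meas_box G X Y (fun x y => x + y < a)); auto. apply open_plus. Qed.

Lemma meas_mult {T} (G : (T -> Prop) -> Prop) X Y :
  measurable_wrt G X -> measurable_wrt G Y -> measurable_wrt G (fun w => X w * Y w).
Proof. intros HX HY. apply crit_lt. intros a. apply (meas_box G X Y (fun x y => x * y < a)); auto. apply open_mult. Qed.

Lemma meas_minus {T} (G : (T -> Prop) -> Prop) X Y :
  measurable_wrt G X -> measurable_wrt G Y -> measurable_wrt G (fun w => X w - Y w).
Proof.
  intros HX HY. apply meas_ext with (fun w => X w + (-1) * Y w).
  - apply meas_plus; auto. apply meas_mult; auto. apply meas_const.
  - intros; ring.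
Qed.

Lemma meas_sum {T} (G : (T -> Prop) -> Prop) (l : list nat) (g : nat -> T -> R) :
  (forall a, In a l -> measurable_wrt G (g a)) ->
  measurable_wrt G (fun om => Rsum_list l (fun a => g a om)).
Proof.
  induction l as [|a l IH]; intros H; simpl.
  - apply meas_const.
  - apply meas_plus; [apply H; simpl; auto|]. apply IH. intros; apply H; simpl; auto.
Qed.

Lemma t_le lam X D a : 0 < lam -> 0 < X -> (- (D / X) / lam <= a <-> 0 <= D + a * lam * X).
Proof.
  intros Hl HX. set (t := - (D / X) / lam).
  assert (Ht : t * (X * lam) = - D) by (unfold t; field; lra).
  assert (P : 0 < X * lam) by (apply Rmult_lt_0_compat; lra).
  split; intro H.
  - assert (t * (X * lam) <= a * (X * lam)) by (apply Rmult_le_compat_r; lra). lra.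
  - destruct (Rle_dec t a) as [h|h]; auto.
    assert (a * (X * lam) < t * (X * lam)) by (apply Rmult_lt_compat_r; lra). lra.
Qed.

Lemma g_char lam X D a : 0 < lam -> 0 < X ->
  (g_lam lam (D / X) <= a <-> 1 <= a \/ (0 <= a /\ 0 <= D + a * lam * X)).
Proof.
  intros Hl HX. rewrite <- (t_le lam X D a Hl HX). unfold g_lam.
  replace (- (D / X) / lam) with (- (D / X) / lam) by reflexivity.
  set (t := - (D / X) / lam). unfold Rmin, Rmax.
  destruct (Rle_dec t 0); destruct (Rle_dec 1 _);
  (split; [intro H; (destruct (Rle_dec 1 a); [left; lra | right; split; lra])
          | intros [H0|[H0 H1]]; lra]).
Qed.

Lemma meas_D {T} (G : (T -> Prop) -> Prop) (Dl X : T -> R) lam :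
  0 < lam -> measurable_wrt G Dl -> measurable_wrt G X -> (forall w, 0 <= X w) ->
  measurable_wrt G (fun om => if Req_EM_T (X om) 0 then 0 else g_lam lam (Dl om / X om)).
Proof.
  intros Hl HD HX Hpos. apply crit_le. intros a.
  apply sg_ext with (fun w => (X w = 0 /\ 0 <= a) \/
     (~ X w = 0 /\ (1 <= a \/ (0 <= a /\ 0 <= Dl w + (a * lam) * X w)))).
  - apply sg_or.
    + apply sg_and; [exact (HX _ (borel_eq 0))|apply sg_const].
    + apply sg_and; [apply sg_compl; exact (HX _ (borel_eq 0))|]. apply sg_or; [apply sg_const|].
      apply sg_and; [apply sg_const|].
      refine (meas_plus G Dl (fun w => (a * lam) * X w) HD _ _ (borel_ge 0)).
      apply meas_mult; auto. apply meas_const.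
  - intros w. destruct (Req_EM_T (X w) 0) as [h|h].
    + split; [intros [[_ H]|[H _]]; auto; tauto| intros H; left; auto].
    + assert (Hx0 : 0 < X w) by (specialize (Hpos w); lra).
      rewrite g_char; auto.
      replace (a * lam * X w) with (a * lam * X w) by reflexivity.
      split; [intros [[H0 _]|[_ H0]]; [tauto|auto] | intros H0; right; auto].
Qed.

Lemma meas_var {Omega : Type} (D0 : nat -> Omega -> R) Om (A : item -> Prop) i :
  A i -> measurable_wrt (sigmaA D0 Om A) (var D0 Om i).
Proof. intros Hi B HB. apply sg_base. exists i; split; auto. exists B; split; auto. tauto. Qed.

Lemma sigmaA_mono {Omega : Type} (D0 : nat -> Omega -> R) Om (A A' : item -> Prop) :
  (forall i, A i -> A' i) -> forall S, sigmaA D0 Om A S -> sigmaA D0 Om A' S.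
Proof. intros H S [i [Hi HB]]. exists i; split; auto. Qed.

Lemma meas_A_mono {Omega : Type} (D0 : nat -> Omega -> R) Om (A A' : item -> Prop) Z :
  (forall i, A i -> A' i) -> measurable_wrt (sigmaA D0 Om A) Z -> measurable_wrt (sigmaA D0 Om A') Z.
Proof. intros H. apply meas_mono. apply sigmaA_mono; auto. Qed.

Lemma Rsum_nonneg (l : list nat) f : (forall a, 0 <= f a) -> 0 <= Rsum_list l f.
Proof. intros H. induction l; simpl; [lra|]. specialize (H a). lra. Qed.

Lemma Xbar_nonneg {Omega : Type} N E (Om : nat -> nat -> Omega -> R)
  (HOm : forall w v om, E w v = true -> 0 <= Om w v om) z om : 0 <= Xbar N E Om z om.
Proof.
  unfold Xbar. apply Rsum_nonneg. intros u. unfold Ind.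
  destruct (E z u) eqn:H; [rewrite Rmult_1_l; auto | lra].
Qed.

Lemma meas_Xbar {Omega : Type} N E (D0 : nat -> Omega -> R) Om A z :
  (forall u, E z u = true -> A (EdgeI z u)) ->
  measurable_wrt (sigmaA D0 Om A) (Xbar N E Om z).
Proof.
  intros H. unfold Xbar. apply meas_sum. intros u _. unfold Ind.
  destruct (E z u) eqn:Hz.
  - apply meas_mult; [apply meas_const|]. exact (meas_var D0 Om A (EdgeI z u) (H u Hz)).
  - apply meas_ext with (fun _ => 0); [apply meas_const|]. intros; ring.
Qed.

Lemma meas_Dfun {Omega : Type} N E (D0 : nat -> Omega -> R) Om lam
  (HOm : forall w v om, E w v = true -> 0 <= Om w v om) (Hl : 0 < lam) A Delta z :
  (forall u, E z u = true -> A (EdgeI z u)) ->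
  measurable_wrt (sigmaA D0 Om A) (Delta z) ->
  measurable_wrt (sigmaA D0 Om A) (Dfun N E Om lam Delta z).
Proof.
  intros H HD. unfold Dfun. apply meas_D; auto.
  - apply meas_Xbar; auto.
  - intros; apply Xbar_nonneg; auto.
Qed.

Lemma meas_Sfun {Omega : Type} N E (D0 : nat -> Omega -> R) Om lam A Delta v :
  (forall w, E w v = true -> A (EdgeI w v) /\
     measurable_wrt (sigmaA D0 Om A) (Dfun N E Om lam Delta w)) ->
  measurable_wrt (sigmaA D0 Om A) (Sfun N E Om lam Delta v).
Proof.
  intros H. unfold Sfun. apply meas_sum. intros w _. unfold Ind.
  destruct (E w v) eqn:Hw.
  - destruct (H w Hw) as [H1 H2].
    apply meas_mult; auto. apply meas_mult; [apply meas_const|].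
    exact (meas_var D0 Om A (EdgeI w v) H1).
  - apply meas_ext with (fun _ => 0); [apply meas_const|]. intros; ring.
Qed.

Lemma closure_meas {Omega : Type} N E (D0 : nat -> Omega -> R) Om lam
  (HOm : forall w v om, E w v = true -> 0 <= Om w v om) (Hl : 0 < lam)
  (A : item -> Prop) (K : nat -> Prop)
  (H1 : forall y, K y -> A (NodeI y))
  (H2 : forall z u, K z -> E z u = true -> A (EdgeI z u))
  (H3 : forall y z, K y -> E z y = true -> K z) :
  forall n y, K y -> measurable_wrt (sigmaA D0 Om A) (cascade N E D0 Om lam n y)
    /\ measurable_wrt (sigmaA D0 Om A) (Dn N E D0 Om lam n y).
Proof.
  assert (HC : forall n y, K y -> measurable_wrt (sigmaA D0 Om A) (cascade N E D0 Om lam n y)).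
  { induction n; intros y Ky.
    - exact (meas_var D0 Om A (NodeI y) (H1 y Ky)).
    - simpl. apply meas_minus; [exact (meas_var D0 Om A (NodeI y) (H1 y Ky))|].
      apply meas_Sfun. intros w Hw. split; [apply H2; eauto|].
      apply meas_Dfun; auto.
      + intros u Hu; apply H2; eauto.
      + apply IHn; eauto. }
  intros n y Ky. split; auto. unfold Dn. apply meas_Dfun; auto.
  all: try (intros u Hu; apply H2; eauto).
Qed.

Lemma reach_snoc Rl x y z : reach Rl x y -> Rl y z -> reach Rl x z.
Proof.
  induction 1; intros Hr.
  - apply reach_step with z; auto. apply reach_refl.
  - apply reach_step with y; auto.
Qed.

Lemma comp_meas {Omega : Type} N E (D0 : nat -> Omega -> R) Om lam
  (HOm : forall w v om, E w v = true -> 0 <= Om w v om) (Hl : 0 < lam)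
  (Hanti : forall u w, E u w = true -> E w u = false) v w :
  E w v = true -> forall n,
  measurable_wrt (sigmaA D0 Om (Cset E v w (EdgeI w v))) (Dn N E D0 Om lam n w).
Proof.
  intros Hwv n.
  assert (Hvw : E v w = false) by auto.
  refine (proj2 (closure_meas N E D0 Om lam HOm Hl _ (Defs.comp E v w) _ _ _ n w _)).
  - intros y Hy. right. exact Hy.
  - intros z u Hz Hzu.
    destruct (classic (z = w /\ u = v)) as [[-> ->]|Hne]; [left; reflexivity|].
    right. split; auto. split; auto. unfold Defs.comp in *. apply reach_snoc with z; auto.
    split; [left; auto|]. intros [[-> ->]|[-> ->]]; [congruence|tauto].
  - intros y z Hy Hzy. unfold Defs.comp in *.
    destruct (classic ((y = v /\ z = w) \/ (y = w /\ z = v))) as [[[-> ->]|[-> ->]]|Hne].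
    + apply reach_refl.
    + congruence.
    + apply reach_snoc with y; auto. split; [right; auto|auto].
  - apply reach_refl.
Qed.

Theorem proposition5 (N : nat) (E : nat -> nat -> bool) (HE : is_tree N E)
  (Omega : Type) (D0 : nat -> Omega -> R) (Om : nat -> nat -> Omega -> R)
  (HOm : forall w v om, E w v = true -> 0 <= Om w v om)
  (lam : R) (Hlam : 0 < lam <= 1) :
  forall (n v : nat), (v < N)%nat ->
    measurable_wrt
      (sigmaA D0 Om (fun i => Mminus E v i \/ i = NodeI v))
      (cascade N E D0 Om lam n v)
    /\ (forall w, E w v = true ->
          measurable_wrt
            (sigmaA D0 Om (fun i => Mminus E w i \/ Mplus_excl E w v i
                                    \/ i = NodeI w \/ i = EdgeI w v))
            (S_edge N E D0 Om lam n w v))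
    /\ measurable_wrt (sigmaA D0 Om (Mminus E v)) (S_node N E D0 Om lam n v).
Proof.
  destruct HE as [_ [_ [Hanti _]]].
  assert (Hl : 0 < lam) by lra.
  assert (P3 : forall n v, measurable_wrt (sigmaA D0 Om (Mminus E v))
                             (Sfun N E Om lam (cascade N E D0 Om lam n) v)).
  { intros n v. apply meas_Sfun. intros w Hw. split.
    - exists w. split; auto. left; reflexivity.
    - eapply meas_A_mono; [|exact (comp_meas N E D0 Om lam HOm Hl Hanti v w Hw n)].
      intros i Hi. exists w. split; auto. }
  assert (P1 : forall n v, measurable_wrt
      (sigmaA D0 Om (fun i => Mminus E v i \/ i = NodeI v)) (cascade N E D0 Om lam n v)).
  { intros [|n] v.
    - exact (meas_var D0 Om _ (NodeI v) (or_intror eq_refl)).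
    - simpl. apply meas_minus; [exact (meas_var D0 Om _ (NodeI v) (or_intror eq_refl))|].
      eapply meas_A_mono; [|apply P3]. intros i Hi; left; auto. }
  intros n v _. split; [auto|split].
  - intros w Hwv. unfold S_edge, Ind. rewrite Hwv.
    apply meas_mult.
    + apply meas_mult; [apply meas_const|].
      exact (meas_var D0 Om _ (EdgeI w v) (or_intror (or_intror (or_intror eq_refl)))).
    + unfold Dn. apply meas_Dfun; auto.
      * intros u Hu. destruct (Nat.eq_dec u v) as [->|Hne].
        -- right; right; right; reflexivity.
        -- right; left. exists u. split; auto. split; auto. left; reflexivity.
      * eapply meas_A_mono; [|apply P1]. intros i [Hi|Hi]; [left|right; right; left]; auto.
  - apply P3.
Qed.
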